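(* Let $H$, $\sigma(H)$, $\Sigma$, $\mathcal D$ and $\rho$ be as below. Then (a) for each $d\in\mathcal D$ there is a unique arrow $\alpha_d\in a(H)$ with $s(\alpha_d)=d$, and $t(\alpha_d)=\rho(d)$; (b) if $d\in\mathcal D$ and $\beta\in a(H)$ satisfies $s(\beta)=\rho(d)$, then $\beta\alpha_d\in\langle\sigma(H)\rangle$.
   Context: $k$ is a field. For a finite quiver $H$ with vertex set $v(H)$ and arrow set $a(H)$, $s(p),t(p)$ denote start and terminal vertices of a path $p$, $e_x$ the trivial path at $x$, and $kH$ the path algebra, where $\beta\alpha$ denotes the path ''first $\alpha$, then $\beta$''. Standing setting: $H$ is a finite quiver and $\sigma(H)\subset kH$ a set of relations such that $\langle a(H)\rangle^m\subseteq\langle\sigma(H)\rangle\subseteq\langle a(H)\rangle^2$ for some $m\ge1$ (where $\langle X\rangle$ is the two-sided ideal generated by $X$); $\Sigma=kH/\langle\sigma(H)\rangle$ is finite-dimensional and satisfies condition (F): the radical of each indecomposable finitely generated projective left $\Sigma$-module is projective or simple. For $z\in v(H)$, $\hat e_z$ is the image of $e_z$, $P_z=\Sigma\hat e_z$ and $S_z$ the associated simple module. Set $\mathcal D=\{d\in v(H): \ell(P_d)=2$ and $\operatorname{Soc}P_d$ is not projective$\}$ and define $\rho:\mathcal D\to v(H)$ by $\rho(d)=y$ where $S_y\cong\operatorname{Soc}P_d$. *)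

(* Defs.v *)
From HB Require Import structures.
From mathcomp Require Import all_boot all_order all_algebra.
From Stdlib Require Import ClassicalEpsilon.
Set Implicit Arguments. Unset Strict Implicit. Unset Printing Implicit Defensive.
Import GRing.Theory.
Local Open Scope ring_scope.

(* A path is a pair (x, [:: a1; ...; an]) with s a1 = x and            *)
(* t a_i = s a_(i+1): "first a1, then a2, ...".  (x, [::]) is e_x.     *)
Section Quiver.
Variables (V E : finType) (s t : E -> V).

Fixpoint qchain (v : V) (l : seq E) : bool :=
  if l is a :: l' then (s a == v) && qchain (t a) l' else true.

Definition qvalid (p : V * seq E) : bool := qchain p.1 p.2.

Definition qpath := {p : V * seq E | qvalid p}.

Definition qstart (p : qpath) : V := (val p).1.
Definition qterm (p : qpath) : V := last (val p).1 (map t (val p).2).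

Lemma qvalid_triv (x : V) : qvalid (x, [::]).
Proof. by []. Qed.

Lemma qvalid_arrow (a : E) : qvalid (s a, [:: a]).
Proof. by rewrite /qvalid /= eqxx. Qed.

Definition etriv (x : V) : qpath := exist _ (x, [::]) (qvalid_triv x).
Definition arrowp (a : E) : qpath := exist _ (s a, [:: a]) (qvalid_arrow a).

(* kH: A is the path algebra of H over k, i.e. a k-algebra with k-basis   *)
(* (b p)_p indexed by the paths, multiplication given by concatenation:   *)
(* b q * b p = b (first p, then q) if t(p) = s(q), and 0 otherwise.        *)
Definition is_path_algebra (k : fieldType) (A : algType k) (b : qpath -> A) :=
  [/\
      forall (ps : seq qpath) (c : qpath -> k), uniq ps ->
        \sum_(p <- ps) c p *: b p = 0 -> forall p, p \in ps -> c p = 0,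
      forall x : A, exists (ps : seq qpath) (c : qpath -> k),
        x = \sum_(p <- ps) c p *: b p,
      forall p q r : qpath, qterm p = qstart q ->
        val r = ((val p).1, (val p).2 ++ (val q).2) -> b q * b p = b r
    &
      forall p q : qpath, qterm p <> qstart q -> b q * b p = 0].

End Quiver.

Section Ideals.
Variable A : pzRingType.

Definition is_ideal (I : A -> Prop) :=
  [/\ I 0, (forall x y, I x -> I y -> I (x + y)),
      (forall a x, I x -> I (a * x)) & (forall a x, I x -> I (x * a))].

Definition gen_ideal (X : A -> Prop) (y : A) : Prop :=
  forall I : A -> Prop, is_ideal I -> (forall x, X x -> I x) -> I y.

Fixpoint ideal_pow (I : A -> Prop) (n : nat) : A -> Prop :=
  match n with
  | 0 => fun _ => True
  | n'.+1 => gen_ideal (fun z => exists x y, [/\ ideal_pow I n' x, I y & z = x * y])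
  end.

End Ideals.

(* Module theory.  A (sub)module is represented as a predicate N on an  *)
(* ambient left R-module M (a whole module M is [fun _ => True]).       *)
(* Homomorphisms out of N are functions M -> M' that are R-linear on N. *)
Section Modules.
Variable R : pzRingType.

Definition lin (X Y : lmodType R) (f : X -> Y) :=
  forall (a : R) (x y : X), f (a *: x + y) = a *: f x + f y.

Section Amb.
Variable M : lmodType R.

Definition submodN (N : M -> Prop) :=
  N 0 /\ forall (a : R) (u v : M), N u -> N v -> N (a *: u + v).

Definition linear_on (Y : lmodType R) (N : M -> Prop) (f : M -> Y) :=
  forall (a : R) (u v : M), N u -> N v -> f (a *: u + v) = a *: f u + f v.

Definition zeroN (N : M -> Prop) := forall u, N u -> u = 0.

Definition projectiveN (N : M -> Prop) :=
  submodN N /\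
  forall (X Y : lmodType R) (g : X -> Y) (f : M -> Y),
    lin g -> (forall y, exists x, g x = y) -> linear_on N f ->
    exists h : M -> X, linear_on N h /\ forall u, N u -> g (h u) = f u.

Definition fingenN (N : M -> Prop) :=
  submodN N /\ exists gs : seq M, (forall x, x \in gs -> N x) /\
    forall u, N u -> exists c : M -> R, u = \sum_(x <- gs) c x *: x.

Definition indecomposableN (N : M -> Prop) :=
  [/\ submodN N, (exists u, N u /\ u <> 0) &
   forall N1 N2 : M -> Prop, submodN N1 -> submodN N2 ->
     (forall u, N1 u -> N u) -> (forall u, N2 u -> N u) ->
     (forall u, N1 u -> N2 u -> u = 0) ->
     (forall u, N u -> exists u1 u2, [/\ N1 u1, N2 u2 & u = u1 + u2]) ->
     zeroN N1 \/ zeroN N2].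

Definition simpleN (N : M -> Prop) :=
  [/\ submodN N, (exists u, N u /\ u <> 0) &
   forall L : M -> Prop, submodN L -> (forall u, L u -> N u) ->
     zeroN L \/ (forall u, N u -> L u)].

Definition coverN (L N : M -> Prop) :=
  [/\ submodN L, submodN N, (forall u, L u -> N u),
      (exists u, N u /\ ~ L u) &
   forall K : M -> Prop, submodN K -> (forall u, L u -> K u) ->
     (forall u, K u -> N u) -> (forall u, K u -> L u) \/ (forall u, N u -> K u)].

Definition radN (N : M -> Prop) (u : M) : Prop :=
  N u /\ forall L, coverN L N -> L u.

Definition socN (N : M -> Prop) (u : M) : Prop :=
  exists us : seq M, u = \sum_(x <- us) x /\
    forall x, x \in us -> exists L : M -> Prop,
      [/\ simpleN L, (forall v, L v -> N v) & L x].

Definition lengthN (N : M -> Prop) (n : nat) :=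
  exists Ms : nat -> M -> Prop,
    [/\ (forall u, Ms 0%N u <-> u = 0), (forall u, Ms n u <-> N u) &
        forall i, (i < n)%N -> coverN (Ms i) (Ms i.+1)].

Definition iso_quotN (M' : lmodType R) (N L : M -> Prop) (N' : M' -> Prop) :=
  exists f : M -> M',
    [/\ linear_on N f, (forall u, N u -> N' (f u)),
        (forall v, N' v -> exists u, N u /\ f u = v) &
        forall u, N u -> (f u = 0 <-> L u)].

End Amb.

Definition condF :=
  forall M : lmodType R,
    indecomposableN (fun _ : M => True) -> fingenN (fun _ : M => True) ->
    projectiveN (fun _ : M => True) ->
    projectiveN (radN (fun _ : M => True)) \/ simpleN (radN (fun _ : M => True)).

End Modules.

(* The modules P_z = Sigma e_z (left ideals of the regular module),    *)
(* the set D and the map rho.  e z is the image of the trivial path.  *)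
Section Sigma.
Variables (V : finType) (S : nzRingType) (e : V -> S).

Definition Pmod (z : V) : S^o -> Prop := fun x => exists a : S, (x : S) = a * e z.

Definition top_iso_soc (y d : V) :=
  iso_quotN (Pmod y) (radN (Pmod y)) (socN (Pmod d)).

Definition inD (d : V) := lengthN (Pmod d) 2 /\ ~ projectiveN (socN (Pmod d)).

Definition rho (d : V) : V := epsilon (inhabits d) (fun y => top_iso_soc y d).

End Sigma.

(* Main.v *)
Require Import Defs.
From HB Require Import structures.
From mathcomp Require Import all_boot all_order all_algebra.
From Stdlib Require Import ClassicalEpsilon Classical.
Set Implicit Arguments. Unset Strict Implicit. Unset Printing Implicit Defensive.
Import GRing.Theory.
Local Open Scope ring_scope.

Section Paths.
Variables (k : fieldType) (V E : finType) (s t : E -> V) (A : algType k) (b : qpath s t -> A).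
Hypothesis Hpa : is_path_algebra b.

Local Notation P := (qpath s t).

Lemma qchain_cat v l1 l2 : qchain s t v (l1 ++ l2) =
  qchain s t v l1 && qchain s t (last v (map t l1)) l2.
Proof. by elim: l1 v => [|a l1 IH] v //=; rewrite IH andbA. Qed.

Lemma pcat_valid (p q : P) : qterm p = qstart q ->
  qvalid s t ((val p).1, (val p).2 ++ (val q).2).
Proof.
move=> h; have hp := valP p; rewrite /qvalid in hp; rewrite /qvalid /= qchain_cat hp /=.
rewrite /qterm in h; rewrite h; have hq := valP q; exact: hq.
Qed.

Definition pcat (p q : P) (h : qterm p = qstart q) : P := exist (qvalid s t) _ (pcat_valid h).

Definition Span (Q : P -> Prop) (x : A) :=
  exists l : seq (k * P), (forall z, z \in l -> Q z.2) /\ x = \sum_(z <- l) z.1 *: b z.2.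

Lemma span0 Q : Span Q 0.
Proof. by exists [::]; split => //; rewrite big_nil. Qed.

Lemma spanD Q x y : Span Q x -> Span Q y -> Span Q (x + y).
Proof.
move=> [l1 [H1 ->]] [l2 [H2 ->]]; exists (l1 ++ l2); split; last by rewrite big_cat.
by move=> z; rewrite mem_cat => /orP [] ?; [apply: H1|apply: H2].
Qed.

Lemma spanZ Q c x : Span Q x -> Span Q (c *: x).
Proof.
move=> [l [H ->]]; exists (map (fun z => (c * z.1, z.2)) l); split.
  by move=> z /mapP [z' Hz' ->] /=; apply: H.
by rewrite big_map scaler_sumr; apply: eq_bigr => z _ /=; rewrite scalerA.
Qed.

Lemma spanN Q x : Span Q x -> Span Q (- x).
Proof. by move=> h; rewrite -scaleN1r; apply: spanZ. Qed.

Lemma spanB Q x y : Span Q x -> Span Q y -> Span Q (x - y).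
Proof. by move=> h1 h2; apply: spanD => //; apply: spanN. Qed.

Lemma span_mono (Q1 Q2 : P -> Prop) x : (forall p, Q1 p -> Q2 p) -> Span Q1 x -> Span Q2 x.
Proof. by move=> h [l [H ->]]; exists l; split => // z /H; apply: h. Qed.

Lemma span_b (Q : P -> Prop) p : Q p -> Span Q (b p).
Proof.
move=> h; exists [:: (1, p)]; split; first by move=> z; rewrite inE => /eqP ->.
by rewrite big_seq1 scale1r.
Qed.

Lemma span_sum (I : eqType) Q (r : seq I) (F : I -> A) :
  (forall i, i \in r -> Span Q (F i)) -> Span Q (\sum_(i <- r) F i).
Proof.
elim: r => [|i r IH] H; first by rewrite big_nil; apply: span0.
rewrite big_cons; apply: spanD; first by apply: H; rewrite inE eqxx.
by apply: IH => j hj; apply: H; rewrite inE hj orbT.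
Qed.

Lemma span_all x : Span (fun _ => True) x.
Proof.
case: Hpa => _ Hsp _ _; have [ps [c ->]] := Hsp x.
exists (map (fun p => (c p, p)) ps); split => //.
by rewrite big_map.
Qed.

Lemma span_ind (Q : P -> Prop) (G : A -> Prop) : G 0 ->
  (forall x y, G x -> G y -> G (x + y)) ->
  (forall c p, Q p -> G (c *: b p)) -> forall x, Span Q x -> G x.
Proof.
move=> G0 GD Gb x [l [H ->]]; elim: l H => [|z l IH] H; first by rewrite big_nil.
rewrite big_cons; apply: GD; first by apply: Gb; apply: H; rewrite inE eqxx.
by apply: IH => w hw; apply: H; rewrite inE hw orbT.
Qed.

Lemma span_mul (Q1 Q2 Q3 : P -> Prop) x y :
  (forall p q (h : qterm p = qstart q), Q1 p -> Q2 q -> Q3 (pcat h)) ->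
  Span Q1 x -> Span Q2 y -> Span Q3 (y * x).
Proof.
move=> HQ [l1 [H1 ->]] [l2 [H2 ->]].
rewrite mulr_suml; apply: span_sum => z2 hz2; rewrite mulr_sumr; apply: span_sum => z1 hz1.
rewrite -scalerAl -scalerAr; apply: spanZ; apply: spanZ.
case: Hpa => _ _ Hc Hn.
have [h|h] := eqVneq (qterm z1.2) (qstart z2.2).
  rewrite (Hc _ _ (pcat h) h) //; apply: span_b; apply: HQ; [exact: H1|exact: H2].
rewrite Hn; first exact: span0.
by move/eqP: h.
Qed.

Lemma regroup (l : seq (k * P)) : exists (ps : seq P) (c : P -> k),
  [/\ uniq ps, (forall q, q \in ps -> exists2 z, z \in l & z.2 = q) &
   \sum_(z <- l) z.1 *: b z.2 = \sum_(q <- ps) c q *: b q].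
Proof.
elim: l => [|z l [ps [c [Hu Hm Hs]]]]; first by exists [::], (fun _ => 0); rewrite !big_nil.
rewrite big_cons Hs.
have [hin|hnin] := boolP (z.2 \in ps).
  exists ps, (fun q => if q == z.2 then c q + z.1 else c q); split => //.
    by move=> q /Hm [w hw <-]; exists w => //; rewrite inE hw orbT.
  rewrite (bigD1_seq _ hin Hu) (bigD1_seq _ hin Hu) /= eqxx scalerDl.
  rewrite addrA [z.1 *: _ + _]addrC; congr (_ + _).
  by apply: eq_bigr => q /negbTE ->.
exists (z.2 :: ps), (fun q => if q == z.2 then z.1 else c q); split.
- by rewrite /= hnin Hu.
- move=> q; rewrite inE => /orP [/eqP ->|/Hm [w hw <-]].
    by exists z => //; rewrite inE eqxx.
  by exists w => //; rewrite inE hw orbT.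
rewrite big_cons eqxx; congr (_ + _); apply: eq_big_seq => q hq.
by case: eqP => // eq; rewrite -eq hq in hnin.
Qed.

Lemma span_notin (Q : P -> Prop) p : Span Q (b p) -> ~ Q p -> False.
Proof.
move=> [l [H Hb]] hQ.
have [ps [c [Hu Hm Hs]]] := regroup l.
have pnin : p \notin ps.
  apply/negP => /Hm [z hz ez]; apply: hQ; rewrite -ez; exact: H.
case: Hpa => Hind _ _ _.
have := Hind (p :: ps) (fun q => if q == p then 1 else - c q).
rewrite /= pnin Hu => /(_ isT).
rewrite big_cons eqxx scale1r.
rewrite (eq_big_seq (fun q => - (c q *: b q))); last first.
  by move=> q hq; case: eqP => [e|_]; [rewrite -e hq in pnin|rewrite scaleNr].
rewrite sumrN -Hs -Hb subrr => /(_ erefl p).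
by rewrite inE eqxx => /(_ isT) /eqP; rewrite oner_eq0.
Qed.


Lemma size_pcat p q (h : qterm p = qstart q) :
  size (val (pcat h)).2 = (size (val p).2 + size (val q).2)%N.
Proof. by rewrite /= size_cat. Qed.

Lemma start_pcat p q (h : qterm p = qstart q) : (val (pcat h)).1 = (val p).1.
Proof. by []. Qed.

Lemma list_pcat p q (h : qterm p = qstart q) : (val (pcat h)).2 = (val p).2 ++ (val q).2.
Proof. by []. Qed.

Lemma span_ideal (Q : P -> Prop) :
  (forall p q (h : qterm p = qstart q), Q p -> Q (pcat h)) ->
  (forall p q (h : qterm p = qstart q), Q q -> Q (pcat h)) ->
  is_ideal (Span Q).
Proof.
move=> H1 H2; split.
- exact: span0.
- exact: spanD.
- move=> a x hx; apply: (span_mul (Q1 := Q) (Q2 := fun _ => True)) => //.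
    by move=> p q h hp _; apply: H1.
  exact: span_all.
- move=> a x hx; apply: (span_mul (Q1 := fun _ => True) (Q2 := Q)) => //.
    by move=> p q h _ hq; apply: H2.
  exact: span_all.
Qed.

Definition len n (p : P) := (n <= size (val p).2)%N.

Lemma len_ideal n : is_ideal (Span (len n)).
Proof.
apply: span_ideal => p q h; rewrite /len size_pcat => hh.
  exact: leq_trans hh (leq_addr _ _).
exact: leq_trans hh (leq_addl _ _).
Qed.

Lemma gen_in (R : pzRingType) (X : R -> Prop) y : X y -> gen_ideal X y.
Proof. by move=> h I _ HI; apply: HI. Qed.

Lemma gen_is_ideal (R : pzRingType) (X : R -> Prop) : is_ideal (gen_ideal X).
Proof.
split.
- by move=> I [] .
- by move=> x y hx hy I HI HX; case: (HI) => _ HD _ _; apply: HD; [apply: hx|apply: hy].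
- by move=> a x hx I HI HX; case: (HI) => _ _ HL _; apply: HL; apply: hx.
- by move=> a x hx I HI HX; case: (HI) => _ _ _ HR; apply: HR; apply: hx.
Qed.

Local Notation J := (gen_ideal (fun y => exists a : E, y = b (arrowp s t a))).

Lemma J_span1 x : J x -> Span (len 1) x.
Proof.
move=> h; apply: h; first exact: len_ideal.
by move=> y [a ->]; apply: span_b.
Qed.

Lemma Jpow1 x : ideal_pow J 1 x -> Span (len 1) x.
Proof.
move=> h; apply: h; first exact: len_ideal.
move=> y [u [v [_ hv ->]]]; case: (len_ideal 1) => _ _ HL _.
by apply: HL; apply: J_span1.
Qed.

Lemma Jpow2 x : ideal_pow J 2 x -> Span (len 2) x.
Proof.
move=> h; apply: h; first exact: len_ideal.
move=> y [u [v [hu hv ->]]].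
apply: (span_mul (Q1 := len 1) (Q2 := len 1)).
- by move=> p q hh; rewrite /len size_pcat => h1 h2; rewrite -[2%N]/(1 + 1)%N leq_add.
- exact: J_span1.
- exact: Jpow1.
Qed.

Lemma Jpow_pow r n : J r -> ideal_pow J n (r ^+ n).
Proof.
move=> hr; elim: n => [|n IH] //=.
apply: gen_in; exists (r ^+ n), r; split => //; exact: exprSr.
Qed.

Lemma tail_valid (p : P) a l : (val p).2 = a :: l -> qvalid s t (t a, l).
Proof.
move=> e; have hp := valP p; rewrite /qvalid e /= in hp.
by case/andP: hp.
Qed.

Lemma head_start (p : P) a l : (val p).2 = a :: l -> s a = (val p).1.
Proof.
move=> e; have hp := valP p; rewrite /qvalid e /= in hp.
by case/andP: hp => /eqP.
Qed.

Lemma b_decomp (p : P) a l (e : (val p).2 = a :: l) :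
  b p = b (exist (qvalid s t) _ (tail_valid e)) * b (arrowp s t a).
Proof.
case: Hpa => _ _ Hc _; symmetry; apply: Hc => //=.
have hs := head_start e; move: e hs; rewrite /=; case: (sval p) => x y /= -> ->. by [].
Qed.

Lemma J_b (p : P) : (val p).2 <> [::] -> J (b p).
Proof.
case e: (val p).2 => [|a l] // _.
rewrite (b_decomp e); case: (gen_is_ideal (fun y => exists a : E, y = b (arrowp s t a))) => _ _ HL _.
by apply: HL; apply: gen_in; exists a.
Qed.

Lemma J_span (Q : P -> Prop) x : (forall p, Q p -> (val p).2 <> [::]) -> Span Q x -> J x.
Proof.
move=> HQ; case: (gen_is_ideal (fun y => exists a : E, y = b (arrowp s t a))) => H0 HD HL _.
apply: span_ind => // c p hp; rewrite -mulr_algl; apply: HL; apply: J_b; exact: HQ.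
Qed.

End Paths.

Section Mod.
Variables (R : pzRingType) (M : lmodType R).

Lemma sm0 (N : M -> Prop) : submodN N -> N 0.
Proof. by case. Qed.
Lemma smD (N : M -> Prop) u v : submodN N -> N u -> N v -> N (u + v).
Proof. by case=> _ h hu hv; rewrite -[u]scale1r; apply: h. Qed.
Lemma smZ (N : M -> Prop) a u : submodN N -> N u -> N (a *: u).
Proof. by case=> h0 h hu; rewrite -[_ *: _]addr0; apply: h. Qed.
Lemma smB (N : M -> Prop) u v : submodN N -> N u -> N v -> N (u - v).
Proof. by move=> hN hu hv; apply: smD => //; rewrite -scaleN1r; apply: smZ. Qed.

Lemma no_chain3 (Ms : nat -> M -> Prop) (Pm N1 N2 : M -> Prop) :
  (forall u, Ms 0%N u <-> u = 0) -> (forall u, Ms 2%N u <-> Pm u) ->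
  (forall i, (i < 2)%N -> coverN (Ms i) (Ms i.+1)) ->
  submodN N1 -> submodN N2 -> (forall u, N1 u -> N2 u) -> (forall u, N2 u -> Pm u) ->
  (exists u, N1 u /\ u <> 0) -> (exists u, N2 u /\ ~ N1 u) -> (exists u, Pm u /\ ~ N2 u) ->
  False.
Proof.
move=> H0 H2 Hc sN1 sN2 s12 s2P [u1 [h1 n1]] [u2 [h2 n2]] [u3 [h3 n3]].
have [_ sL _ _ maxL] := Hc 0%N isT.
have [_ sP sLP _ maxP] := Hc 1%N isT.
have sub0 : forall (K : M -> Prop), submodN K -> forall u, Ms 0%N u -> K u.
  by move=> K hK u /H0 ->; apply: sm0.
have sN2L : submodN (fun u => N2 u /\ Ms 1%N u).
  split; first by split; apply: sm0.
  move=> a u v [? ?] [? ?]; split.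
    by case: sN2 => _ h; apply: h.
  by case: sL => _ h; apply: h.
have [hz|hall] := maxL _ sN2L (sub0 _ sN2L) (fun u hu => hu.2).
- pose K u := exists n l, [/\ N1 n, Ms 1%N l & u = n + l].
  have sK : submodN K.
    split; first by exists 0, 0; split; [apply: sm0|apply: sm0|rewrite addr0].
    move=> a u v [n [l [hn hl ->]]] [n' [l' [hn' hl' ->]]].
    exists (a *: n + n'), (a *: l + l'); split.
    + by case: sN1 => _ h; apply: h.
    + by case: sL => _ h; apply: h.
    + by rewrite scalerDr -!addrA; congr (_ + _); rewrite addrCA.
  have LK : forall u, Ms 1%N u -> K u.
    by move=> u hu; exists 0, u; split => //; [apply: sm0|rewrite add0r].
  have KP : forall u, K u -> Ms 2%N u.
    move=> u [n [l [hn hl ->]]]; apply: smD => //; last exact: sLP.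
    by apply/H2; apply: s2P; apply: s12.
  have [hKL|hPK] := maxP K sK LK KP.
  + have : Ms 1%N u1 by apply: hKL; exists u1, 0; split => //; [apply: sm0|rewrite addr0].
    by move=> hu1; have /H0 := hz u1 (conj (s12 _ h1) hu1).
  + have [n [l [hn hl el]]] := hPK u2 ((H2 u2).2 (s2P _ h2)).
    have hl2 : N2 l.
      have -> : l = u2 - n by rewrite el [n + l]addrC addrK.
      by apply: smB => //; apply: s12.
    have /H0 l0 := hz l (conj hl2 hl).
    by apply: n2; rewrite el l0 addr0.
- have hN2L : forall u, N2 u -> Ms 1%N u.
    have [hx|hx] := maxP N2 sN2 (fun u hu => (hall u hu).1) (fun u hu => (H2 u).2 (s2P _ hu)).
      exact: hx.
    by case: n3; apply: hx; apply/H2.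
  have sN1' : forall u, Ms 0%N u -> N1 u by apply: sub0.
  have [hx|hx] := maxL N1 sN1 sN1' (fun u hu => hN2L _ (s12 _ hu)).
    by apply: n1; apply/H0; apply: hx.
  by apply: n2; apply: hx; apply: hN2L.
Qed.
End Mod.

Section Main.
Variables (k : fieldType) (V E : finType) (s t : E -> V) (A : algType k) (b : qpath s t -> A)
 (sigma : A -> Prop) (m : nat) (Sig : nzRingType) (pi : {rmorphism A -> Sig}).
Local Notation P := (qpath s t).
Local Notation J := (gen_ideal (fun y => exists a : E, y = b (arrowp s t a))).
Hypotheses (Hpa : is_path_algebra b) (Hm0 : (0 < m)%N)
 (Hm : forall x, ideal_pow J m x -> gen_ideal sigma x)
 (H2 : forall x, gen_ideal sigma x -> ideal_pow J 2 x)
 (Hsurj : forall y, exists x, pi x = y) (Hker : forall x, pi x = 0 <-> gen_ideal sigma x).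

Local Notation E0 z := (b (etriv s t z)).
Local Notation Ba a := (b (arrowp s t a)).
Definition ee z := pi (E0 z).
Definition kap (c : k) := pi (c%:A).

Lemma ker2 x : pi x = 0 -> Span b (len 2) x.
Proof. by move/Hker/H2; apply: Jpow2. Qed.

Lemma pi_scale c x : pi (c *: x) = kap c * pi x.
Proof. by rewrite -mulr_algl rmorphM. Qed.

Lemma kapC c y : kap c * y = y * kap c.
Proof. have [x <-] := Hsurj y; by rewrite -!rmorphM mulr_algl mulr_algr. Qed.

Lemma kapM c1 c2 : kap (c1 * c2) = kap c1 * kap c2.
Proof. by rewrite /kap -rmorphM -scalerAl mul1r scalerA. Qed.

Lemma kapD c1 c2 : kap (c1 + c2) = kap c1 + kap c2.
Proof. by rewrite /kap -rmorphD scalerDl. Qed.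

Lemma kapB c1 c2 : kap (c1 - c2) = kap c1 - kap c2.
Proof. by rewrite /kap -rmorphB scalerBl. Qed.

Lemma kap1 : kap 1 = 1.
Proof. by rewrite /kap scale1r rmorph1. Qed.

Lemma kap0 : kap 0 = 0.
Proof. by rewrite /kap scale0r rmorph0. Qed.

Lemma kapV c : c != 0 -> kap c^-1 * kap c = 1.
Proof. by move=> h; rewrite -kapM mulVf // kap1. Qed.

Lemma pi0_span (Q : P -> Prop) x : (forall p, Q p -> pi (b p) = 0) -> Span b Q x -> pi x = 0.
Proof.
move=> HQ; apply: (span_ind (G := fun y => pi y = 0)) => //; first by rewrite rmorph0.
  by move=> u v hu hv; rewrite rmorphD hu hv addr0.
by move=> c p hp; rewrite pi_scale HQ // mulr0.
Qed.

Lemma bEE z : E0 z * E0 z = E0 z.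
Proof. by case: Hpa => _ _ Hc _; apply: Hc. Qed.

Lemma bEE0 z w : z != w -> E0 z * E0 w = 0.
Proof. by move=> h; case: Hpa => _ _ _ Hn; apply: Hn; rewrite /qterm /qstart /= => e; by rewrite e eqxx in h. Qed.

Lemma bAE a : Ba a * E0 (s a) = Ba a.
Proof. by case: Hpa => _ _ Hc _; apply: Hc. Qed.

Lemma bEA a : E0 (t a) * Ba a = Ba a.
Proof. by case: Hpa => _ _ Hc _; apply: Hc. Qed.

Lemma bEA0 a z : z != t a -> E0 z * Ba a = 0.
Proof. by move=> h; case: Hpa => _ _ _ Hn; apply: Hn; rewrite /qterm /qstart /= => e; by rewrite e eqxx in h. Qed.

Lemma bAA0 a : s a != t a -> Ba a * Ba a = 0.
Proof. by move=> h; case: Hpa => _ _ _ Hn; apply: Hn; rewrite /qterm /qstart /= => e; by rewrite e eqxx in h. Qed.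

Lemma ee_idem z : ee z * ee z = ee z.
Proof. by rewrite /ee -rmorphM bEE. Qed.

Lemma Pmod_sub z : submodN (Pmod ee z).
Proof.
split; first by exists 0; rewrite mul0r.
move=> a u v [a1 ->] [a2 ->]; exists (a * a1 + a2).
by rewrite mulrDl -mulrA.
Qed.

Lemma Pmod_mem z u : Pmod ee z u -> u * ee z = u.
Proof. by move=> [a ->]; rewrite -mulrA ee_idem. Qed.

Lemma Pmod_e z : Pmod ee z (ee z).
Proof. by exists (ee z); rewrite ee_idem. Qed.

Lemma Pmod_mul z u : u * ee z = u -> Pmod ee z u.
Proof. by move=> h; exists u. Qed.


Definition startNT z (p : P) := (val p).1 = z /\ (val p).2 <> [::].
Definition headA a (p : P) := exists l, (val p).2 = a :: l.

Lemma decomp z u : Pmod ee z u ->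
  exists c r, u = kap c * ee z + pi r /\ Span b (startNT z) r.
Proof.
move=> [a ->]; have [x <-] := Hsurj a.
have hs : Span b (fun p => (val p).1 = z) (x * E0 z).
  apply: (span_mul Hpa (Q1 := fun p => p = etriv s t z) (Q2 := fun _ => True)).
  - by move=> p q h hp _; rewrite start_pcat hp.
  - exact: span_b.
  - exact: span_all.
rewrite /ee -rmorphM.
move: hs; apply: (span_ind (G := fun y => exists c r, pi y = kap c * pi (E0 z) + pi r /\ Span b (startNT z) r)).
- by exists 0, 0; rewrite kap0 mul0r add0r !rmorph0; split => //; apply: span0.
- move=> y1 y2 [c1 [r1 [e1 h1]]] [c2 [r2 [e2 h2]]]; exists (c1 + c2), (r1 + r2).
  split; last exact: spanD.
  rewrite !rmorphD e1 e2 kapD mulrDl.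
  by rewrite -!addrA; congr (_ + _); rewrite addrCA.
- move=> c p hp; case el: (val p).2 => [|a' l].
    have -> : p = etriv s t z.
      apply/val_inj; rewrite /= -hp -el. exact: surjective_pairing.
    by exists c, 0; rewrite rmorph0 addr0 pi_scale; split => //; apply: span0.
  exists 0, (c *: b p); rewrite kap0 mul0r add0r; split => //.
  by apply: spanZ; apply: span_b; split => //; rewrite el.
Qed.

Lemma span_headA a x : Span b (headA a) (x * Ba a).
Proof.
apply: (span_mul Hpa (Q1 := fun p => p = arrowp s t a) (Q2 := fun _ => True)).
- by move=> p q h hp _; exists (val q).2; rewrite list_pcat hp.
- exact: span_b.
- exact: span_all.
Qed.

Lemma headA_len1 a p : headA a p -> len 1 p.
Proof. by move=> [l e]; rewrite /len e. Qed.

Lemma arrow_not_len2 a : ~ len 2 (arrowp s t a).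
Proof. by []. Qed.

Lemma pa_ne0 a : pi (Ba a) <> 0.
Proof. by move/ker2 => h; apply: (span_notin Hpa h). Qed.

Lemma e_notin2 d a1 a2 x y : ee d <> x * pi (Ba a1) + y * pi (Ba a2).
Proof.
have [x' <-] := Hsurj x; have [y' <-] := Hsurj y.
rewrite /ee -!rmorphM -rmorphD => e.
have : pi (E0 d - (x' * Ba a1 + y' * Ba a2)) = 0 by rewrite rmorphB e subrr.
move/ker2 => h.
have h1 : Span b (len 1) (x' * Ba a1 + y' * Ba a2).
  apply: spanD; apply: (span_mono (Q1 := headA _)); (try exact: headA_len1); exact: span_headA.
have : Span b (len 1) (E0 d).
  rewrite -(subrK (x' * Ba a1 + y' * Ba a2) (E0 d)); apply: spanD => //.
  by apply: (span_mono (Q1 := len 2)) => // p; rewrite /len; apply: ltnW.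
by move=> hh; apply: (span_notin Hpa hh).
Qed.

Lemma e_notin1 d a x : ee d <> x * pi (Ba a).
Proof. by move=> e; apply: (@e_notin2 d a a x 0); rewrite mul0r addr0. Qed.

Lemma exists_arrow d : inD ee d -> exists a, s a = d.
Proof.
move=> [[Ms [H0 H2' Hc]] _]; apply: NNPP => hno.
have hna : forall a, s a <> d by move=> a ea; apply: hno; exists a.
have [_ sL _ [u [hu nu]] _] := Hc 0%N isT.
have [_ _ sLP [v [hv nv]] _] := Hc 1%N isT.
have huP : Pmod ee d u by apply/H2'; apply: sLP.
have [c [r [eu hr]]] := decomp huP.
have pr : pi r = 0.
  apply: (pi0_span (Q := startNT d)) hr => p [hp1 hp2]; exfalso.
  case el: (val p).2 hp2 => [|a l] // _; apply: (hna a); rewrite -hp1; exact: head_start el.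
rewrite pr addr0 in eu.
have cn0 : c != 0 by apply/eqP => c0; apply: nu; apply/H0; rewrite eu c0 kap0 mul0r.
have he : Ms 1%N (ee d).
  have -> : ee d = kap c^-1 * u by rewrite eu mulrA kapV // mul1r.
  exact: smZ.
apply: nv; have [a ->] := (H2' v).1 hv; exact: smZ.
Qed.

Lemma sD (N : Sig^o -> Prop) (u v : Sig) : submodN N -> N u -> N v -> N (u + v).
Proof. exact: smD. Qed.
Lemma sZ (N : Sig^o -> Prop) (a u : Sig) : submodN N -> N u -> N (a * u).
Proof. exact: smZ. Qed.
Lemma sB (N : Sig^o -> Prop) (u v : Sig) : submodN N -> N u -> N v -> N (u - v).
Proof. exact: smB. Qed.

Lemma cyc_sub (w : Sig) : submodN (fun u : Sig^o => exists x, u = x * w).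
Proof.
split; first by exists 0; rewrite mul0r.
by move=> a u v [x ->] [y ->]; exists (a * x + y); rewrite mulrDl -mulrA.
Qed.

Lemma cyc2_sub (w1 w2 : Sig) :
  submodN (fun u : Sig^o => exists x y, u = x * w1 + y * w2).
Proof.
split; first by exists 0, 0; rewrite !mul0r addr0.
move=> a u v [x [y ->]] [x' [y' ->]]; exists (a * x + x'), (a * y + y').
rewrite !mulrDl; change (a * (x * w1 + y * w2) + (x' * w1 + y' * w2) =
  a * x * w1 + x' * w1 + (a * y * w2 + y' * w2)).
by rewrite mulrDr !mulrA -!addrA; congr (_ + _); rewrite addrCA.
Qed.

Lemma pa_e a : pi (Ba a) * ee (s a) = pi (Ba a).
Proof. by rewrite /ee -rmorphM bAE. Qed.

Lemma unique_arrow d a1 a2 : inD ee d -> s a1 = d -> s a2 = d -> a1 = a2.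
Proof.
move=> [[Ms [H0 H2' Hc]] _] h1 h2.
have [//|hne] := eqVneq a1 a2; exfalso.
apply: (no_chain3 (Ms := Ms) (Pm := Pmod ee d)
  (N1 := fun u : Sig^o => exists x, u = x * pi (Ba a1))
  (N2 := fun u : Sig^o => exists x y, u = x * pi (Ba a1) + y * pi (Ba a2))) => //.
- exact: cyc_sub.
- exact: cyc2_sub.
- by move=> u [x ->]; exists x, 0; rewrite mul0r addr0.
- move=> u [x [y ->]]; apply: Pmod_mul.
  by rewrite mulrDl -!mulrA -{1}h1 -h2 !pa_e.
- by exists (pi (Ba a1)); split; [exists 1; rewrite mul1r|apply: pa_ne0].
- exists (pi (Ba a2)); split; first by exists 0, 1; rewrite mul0r mul1r add0r.
  move=> [x ex]; have [x' ex'] := Hsurj x; rewrite -ex' -rmorphM in ex.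
  have : pi (Ba a2 - x' * Ba a1) = 0 by rewrite rmorphB ex subrr.
  move/ker2 => hk.
  have hs : Span b (fun p => len 2 p \/ headA a1 p) (Ba a2).
    rewrite -(subrK (x' * Ba a1) (Ba a2)); apply: spanD.
      by apply: (span_mono (Q1 := len 2)) => // p hp; left.
    by apply: (span_mono (Q1 := headA a1)) => [p hp|]; [right|exact: span_headA].
  apply: (span_notin Hpa hs) => [[//|[l /= [el _]]]].
  by rewrite el eqxx in hne.
- exists (ee d); split; first exact: Pmod_e.
  by move=> [x [y ey]]; apply: (@e_notin2 d a1 a2 x y).
Qed.

Lemma part_b d a c : inD ee d -> s a = d -> s c = t a -> pi (Ba c * Ba a) = 0.
Proof.
move=> [[Ms [H0 H2' Hc]] _] ha hc.
have [//|hne] := eqVneq (pi (Ba c * Ba a)) 0; exfalso.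
apply: (no_chain3 (Ms := Ms) (Pm := Pmod ee d)
  (N1 := fun u : Sig^o => exists x, u = x * pi (Ba c * Ba a))
  (N2 := fun u : Sig^o => exists x, u = x * pi (Ba a))) => //.
- exact: cyc_sub.
- exact: cyc_sub.
- by move=> u [x ->]; exists (x * pi (Ba c)); rewrite rmorphM mulrA.
- by move=> u [x ->]; apply: Pmod_mul; rewrite -mulrA -ha pa_e.
- by exists (pi (Ba c * Ba a)); split; [exists 1; rewrite mul1r|apply/eqP].
- exists (pi (Ba a)); split; first by exists 1; rewrite mul1r.
  move=> [x ex]; have [x' ex'] := Hsurj x; rewrite -ex' -rmorphM in ex.
  have : pi (Ba a - x' * (Ba c * Ba a)) = 0 by rewrite rmorphB ex subrr.
  move/ker2 => hk.
  have h2 : Span b (len 2) (x' * (Ba c * Ba a)).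
    case: (len_ideal Hpa 2) => _ _ HL _; apply: HL.
    apply: (span_mul Hpa (Q1 := fun p => p = arrowp s t a) (Q2 := fun p => p = arrowp s t c)).
    - by move=> p q h hp hq; rewrite /len size_pcat hp hq.
    - exact: span_b.
    - exact: span_b.
  have hs : Span b (len 2) (Ba a).
    by rewrite -(subrK (x' * (Ba c * Ba a)) (Ba a)); apply: spanD.
  exact: (span_notin Hpa hs).
- exists (ee d); split; first exact: Pmod_e.
  by move=> [x ex]; apply: (@e_notin1 d a x).
Qed.

Section Alpha.
Variables (d : V) (al : E).
Hypotheses (HD : inD ee d) (has : s al = d) (hau : forall a, s a = d -> a = al).

Local Notation pa := (pi (Ba al)).

Lemma aa_zero (p : P) a l : (val p).2 = al :: a :: l -> pi (b p) = 0.
Proof.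
move=> e; rewrite (b_decomp Hpa e).
set p' := exist _ _ _.
have e' : (val p').2 = a :: l by [].
have hs : s a = t al by rewrite (head_start e').
by rewrite (b_decomp Hpa e') -mulrA rmorphM (part_b HD has hs) mulr0.
Qed.

Definition aaP (p : P) := exists a l, (val p).2 = al :: a :: l.

Lemma aa_span x : Span b aaP x -> pi x = 0.
Proof. by apply: pi0_span => p [a [l e]]; apply: aa_zero e. Qed.

Lemma head_kap y : Span b (headA al) y -> exists c, pi y = kap c * pa.
Proof.
apply: (span_ind (G := fun y => exists c, pi y = kap c * pa)).
- by exists 0; rewrite kap0 mul0r rmorph0.
- by move=> y1 y2 [c1 e1] [c2 e2]; exists (c1 + c2); rewrite rmorphD e1 e2 kapD mulrDl.
move=> c p [l e]; case: l e => [|a l] e.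
  have -> : p = arrowp s t al.
    apply/val_inj; rewrite /= -e (head_start e); exact: surjective_pairing.
  by exists c; rewrite pi_scale.
by exists 0; rewrite pi_scale (aa_zero e) kap0 !mul0r mulr0.
Qed.

Lemma startd_kap r : Span b (startNT d) r -> exists c, pi r = kap c * pa.
Proof.
move=> h; apply: head_kap; apply: (span_mono (Q1 := startNT d)) h => p [h1 h2].
case el: (val p).2 h2 => [|a l] // _; exists l; rewrite el (hau (a := a)) //.
by rewrite (head_start el).
Qed.

Lemma Pd_struct u : Pmod ee d u -> exists c c', u = kap c * ee d + kap c' * pa.
Proof.
move=> /decomp [c [r [-> hr]]]; have [c' ->] := startd_kap hr.
by exists c, c'.
Qed.

Lemma mul_pa x : exists c, x * pa = kap c * pa.
Proof.
have [x' <-] := Hsurj x; rewrite -rmorphM; apply: head_kap; exact: span_headA.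
Qed.

Lemma pa_pa : pa * pa = 0.
Proof.
have [e|ne] := eqVneq (s al) (t al).
  by rewrite -rmorphM (part_b HD has e).
by rewrite -rmorphM bAA0 // rmorph0.
Qed.

Lemma pa_ed : pa * ee d = pa.
Proof. by rewrite -has pa_e. Qed.

Lemma e_pa : ee (t al) * pa = pa.
Proof. by rewrite /ee -rmorphM bEA. Qed.

Lemma e_pa0 z : z != t al -> ee z * pa = 0.
Proof. by move=> h; rewrite /ee -rmorphM bEA0 // rmorph0. Qed.

Definition Nm (u : Sig^o) := exists x, u = x * pa.

Lemma Nm_simple : simpleN Nm.
Proof.
split; first exact: cyc_sub.
  by exists pa; split; [exists 1; rewrite mul1r|apply: pa_ne0].
move=> L sL LN; have [hz|hnz] := classic (zeroN L); first by left.
right; have [v hv] := not_all_ex_not _ _ hnz.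
have [Lv nv] := imply_to_and _ _ hv.
have [x ex] := LN v Lv; have [c ec] := mul_pa x; rewrite ec in ex.
have cn0 : c != 0 by apply/eqP => c0; apply: nv; rewrite ex c0 kap0 mul0r.
have Lpa : L pa.
  have -> : pa = kap c^-1 * v by rewrite ex mulrA kapV // mul1r.
  exact: smZ.
by move=> u [y ->]; apply: smZ.
Qed.

Lemma Nm_Pd u : Nm u -> Pmod ee d u.
Proof. by move=> [x ->]; apply: Pmod_mul; rewrite -mulrA pa_ed. Qed.

Lemma simple_in_N (L : Sig^o -> Prop) : simpleN L -> (forall u, L u -> Pmod ee d u) ->
  forall u, L u -> Nm u.
Proof.
move=> [sL _ Lmax] LP v Lv; apply: NNPP => nv.
have [c [c' ev]] := Pd_struct (LP _ Lv).
have cn0 : c != 0.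
  by apply/eqP => c0; apply: nv; exists (kap c'); rewrite ev c0 kap0 mul0r add0r.
have h1 : pa * v = kap c * pa.
  rewrite ev mulrDr !mulrA -!kapC -!mulrA pa_ed pa_pa mulr0 addr0.
  by [].
have Lpa : L pa.
  have -> : pa = kap c^-1 * (pa * v) by rewrite h1 mulrA kapV // mul1r.
  by apply: smZ => //; apply: smZ.
have Le : L (ee d).
  have -> : ee d = kap c^-1 * (v - kap c' * pa).
    by rewrite ev addrK mulrA kapV // mul1r.
  apply: smZ => //; apply: smB => //; exact: smZ.
have NL : forall u, Nm u -> L u by move=> u [x ->]; apply: smZ.
have [_ _ Nmax] := Nm_simple.
case: (Lmax Nm (cyc_sub pa) NL) => [hz|hLN].
  by apply: (@pa_ne0 al); apply: hz; exists 1; rewrite mul1r.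
have [x ex] := hLN _ Le; exact: (@e_notin1 d al x).
Qed.

Lemma socN_iff u : socN (Pmod ee d) u <-> Nm u.
Proof.
split.
  move=> [us [-> hus]]; elim: us hus => [|x us IH] hus.
    by rewrite big_nil; exists 0; rewrite mul0r.
  rewrite big_cons; apply: smD; first exact: cyc_sub.
    have [L [sL LP Lx]] := hus x (mem_head _ _).
    exact: simple_in_N sL LP _ Lx.
  by apply: IH => y hy; apply: hus; rewrite inE hy orbT.
move=> hu; exists [:: u]; split; first by rewrite big_seq1.
move=> x; rewrite inE => /eqP ->; exists Nm; split => //.
  exact: Nm_simple.
exact: Nm_Pd.
Qed.


Lemma rho_unique y : top_iso_soc ee y d -> y = t al.
Proof.
move=> [f [hlin hmap hsurj hker]].
have [//|hne] := eqVneq y (t al); exfalso.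
have [u [Pu fu]] := hsurj pa ((socN_iff pa).2 (ex_intro _ 1 (esym (mul1r _)))).
have P0 : Pmod ee y 0 by exists 0; rewrite mul0r.
have f0 : f 0 = 0.
  have := hlin (-1) 0 0 P0 P0; rewrite scaler0 addr0 scaleN1r => h.
  by rewrite {1}h addNr.
have fe : f (ee y) = 0.
  have := hlin (ee y) (ee y) 0 (Pmod_e y) P0; rewrite addr0 f0 addr0.
  change (f (ee y * ee y) = ee y * f (ee y) -> f (ee y) = 0).
  rewrite ee_idem => ->.
  have [x ex] := (socN_iff _).1 (hmap _ (Pmod_e y)).
  have [c ec] := mul_pa x.
  by rewrite ex ec mulrA -kapC -mulrA e_pa0 // mulr0.
have [a ea] := Pu.
have := hlin a (ee y) 0 (Pmod_e y) P0; rewrite addr0 f0 addr0 fe scaler0.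
change (f (a * ee y) = 0 -> False); rewrite -ea fu.
exact: pa_ne0.
Qed.

Local Notation w := (t al).

Lemma telescope (rh : Sig) n : rh * ee w = rh ->
  (\sum_(i < n.+1) rh ^+ i) * (ee w - rh) = ee w - rh ^+ n.+1.
Proof.
move=> hr; elim: n => [|n IH].
  by rewrite big_ord1 expr0 mul1r expr1.
rewrite big_ord_recr /= mulrDl IH mulrBr.
have -> : rh ^+ n.+1 * ee w = rh ^+ n.+1 by rewrite exprSr -mulrA hr.
by rewrite -exprSr addrA subrK.
Qed.

Lemma nil_lemma (L : Sig^o -> Prop) l : submodN L -> L l -> Pmod ee w l -> l * pa = pa ->
  L (ee w).
Proof.
move=> sL Ll Pl hl.
have [c [r [el hr]]] := decomp Pl.
have hrpa : pi r * pa = 0.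
  rewrite -rmorphM; apply: aa_span.
  apply: (span_mul Hpa (Q1 := fun p => p = arrowp s t al) (Q2 := startNT w)) => //.
  - move=> p q h hp [_ hq]; rewrite /aaP list_pcat hp /=.
    by case: (val q).2 hq => [|a l'] // _; exists a, l'.
  - exact: span_b.
have hc : pa = kap c * pa.
  by rewrite -{1}hl el mulrDl hrpa addr0 -mulrA e_pa.
have c1 : c = 1.
  apply/eqP; rewrite eq_sym -subr_eq0; apply/negPn/negP => hne.
  apply: (@pa_ne0 al).
  by rewrite -[pa]mul1r -(kapV hne) -mulrA kapB kap1 mulrBl mul1r -hc subrr mulr0.
rewrite c1 kap1 mul1r in el.
set rh := - pi r.
have hrh : rh * ee w = rh.
  have := Pmod_mem Pl; rewrite el mulrDl ee_idem => /addrI h.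
  by rewrite /rh mulNr h.
have hJ : gen_ideal (fun y => exists a : E, y = Ba a) (- r).
  have := J_span Hpa (Q := startNT w) (fun p hp => hp.2) hr.
  case: (gen_is_ideal (fun y => exists a : E, y = Ba a)) => _ _ HL _ hJr.
  by rewrite -mulN1r; apply: HL.
have rhm : rh ^+ m = 0.
  rewrite /rh -rmorphN -rmorphXn; apply/Hker; apply: Hm; exact: Jpow_pow.
have [n hn] : exists n, m = n.+1 by exists m.-1; rewrite prednK.
have := telescope n hrh; rewrite -hn rhm subr0 => ht.
have el' : l = ee w - rh by rewrite el /rh opprK.
rewrite -ht -el'; exact: smZ.
Qed.

Definition Kr (u : Sig^o) := Pmod ee w u /\ u * pa = 0.

Lemma Kr_cover : coverN Kr (Pmod ee w).
Proof.
have sP := Pmod_sub w.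
split => //.
- split; first by split; [apply: sm0|rewrite mul0r].
  move=> a u v [Pu hu] [Pv hv]; split; first by case: sP => _; apply.
  change ((a * u + v) * pa = 0); by rewrite mulrDl -mulrA hu hv mulr0 addr0.
- by move=> u [].
- by exists (ee w); split; [apply: Pmod_e|move=> [_]; rewrite e_pa; apply: pa_ne0].
move=> K sK KrK KP; have [h|h] := classic (forall u, K u -> Kr u); first by left.
right; have [v hv] := not_all_ex_not _ _ h; have [Kv nv] := imply_to_and _ _ hv.
have Pv := KP _ Kv.
have [c ec] := mul_pa v.
have cn0 : c != 0 by apply/eqP => c0; apply: nv; split => //; rewrite ec c0 kap0 mul0r.
have Kw : K (ee w - kap c^-1 * v).
  apply: KrK; split; first by apply: sB => //; [apply: Pmod_e|apply: sZ].
  by rewrite mulrBl e_pa -mulrA ec mulrA kapV // mul1r subrr.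
have Ke : K (ee w).
  have -> : ee w = (ee w - kap c^-1 * v) + kap c^-1 * v by rewrite subrK.
  by apply: sD => //; apply: sZ.
by move=> u [a ->]; apply: sZ.
Qed.

Lemma rho_exist : top_iso_soc ee w d.
Proof.
exists (fun u : Sig^o => (u * pa : Sig^o)); split.
- move=> a u v _ _; change ((a * u + v) * pa = a * (u * pa) + v * pa).
  by rewrite mulrDl mulrA.
- by move=> u [x ->]; apply/socN_iff; exists x; rewrite -mulrA e_pa.
- move=> v /socN_iff [x ->]; exists (x * ee w); split; first by exists x.
  by rewrite -mulrA e_pa.
move=> u Pu; split.
  move=> hu; split => // L [sL _ LP [v [Pv nLv]] Lmax]; apply: NNPP => nL.
  pose K' (z : Sig^o) := exists l x, L l /\ z = l + x * u.
  have sK' : submodN K'.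
    split; first by exists 0, 0; split; [apply: sm0|rewrite mul0r addr0].
    move=> a z1 z2 [l1 [x1 [L1 ->]]] [l2 [x2 [L2 ->]]].
    exists (a *: l1 + l2), (a * x1 + x2); split; first by case: sL => _; apply.
    change (a * (l1 + x1 * u) + (l2 + x2 * u) = a * l1 + l2 + (a * x1 + x2) * u).
    by rewrite mulrDr mulrDl !mulrA -!addrA; congr (_ + _); rewrite addrCA.
  have LK : forall z, L z -> K' z by move=> z hz; exists z, 0; rewrite mul0r addr0.
  have KP' : forall z, K' z -> Pmod ee w z.
    move=> z [l [x [Ll ->]]]; apply: sD; first exact: Pmod_sub.
      exact: LP.
    by apply: sZ => //; exact: Pmod_sub.
  case: (Lmax K' sK' LK KP') => [hKL|hPK].
    by apply: nL; apply: hKL; exists 0, 1; rewrite mul1r add0r; split => //; apply: sm0.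
  have [l [x [Ll el]]] := hPK _ (Pmod_e w).
  have hl : l * pa = pa.
    have -> : l = ee w - x * u by rewrite el addrK.
    by rewrite mulrBl e_pa -mulrA hu mulr0 subr0.
  have Le := nil_lemma sL Ll (LP _ Ll) hl.
  by apply: nLv; have [a ->] := Pv; apply: sZ.
by move=> [_ hr]; exact: (hr _ Kr_cover).2.
Qed.
End Alpha.
End Main.

Theorem lemma3p3
  (k : fieldType) (V E : finType) (s t : E -> V)
  (A : algType k) (b : qpath s t -> A)
  (sigma : A -> Prop) (m : nat)
  (Sig : nzRingType) (pi : {rmorphism A -> Sig}) :
  is_path_algebra b ->
  (0 < m)%N ->
  (forall x, ideal_pow (gen_ideal (fun y => exists a : E, y = b (arrowp s t a))) m x ->
             gen_ideal sigma x) ->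
  (forall x, gen_ideal sigma x ->
             ideal_pow (gen_ideal (fun y => exists a : E, y = b (arrowp s t a))) 2 x) ->
  (forall y : Sig, exists x : A, pi x = y) ->
  (forall x : A, pi x = 0 <-> gen_ideal sigma x) ->
  condF Sig ->
  let e := fun z : V => pi (b (etriv s t z)) in
  forall d : V, inD e d ->
    exists alpha : E,
      [/\ s alpha = d, (forall a : E, s a = d -> a = alpha),
          t alpha = rho e d &
          forall beta : E, s beta = rho e d ->
            gen_ideal sigma (b (arrowp s t beta) * b (arrowp s t alpha))].
Proof.
move=> Hpa Hm0 Hm H2 Hsurj Hker _ e d HD.
have HD' : inD (ee b pi) d := HD.
have [al hal] := exists_arrow Hpa Hsurj HD'.
have hau : forall a, s a = d -> a = al.
  by move=> a ha; apply: (unique_arrow Hpa H2 Hsurj Hker HD' ha hal).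
have hrho : rho e d = t al.
  have hex : exists y, top_iso_soc e y d.
    by exists (t al); exact: (rho_exist Hpa Hm0 Hm H2 Hsurj Hker HD' hal hau).
  have := epsilon_spec (inhabits d) (fun y => top_iso_soc e y d) hex.
  exact: (rho_unique Hpa H2 Hsurj Hker HD' hal hau).
exists al; split => //.
move=> beta hb; apply/Hker; apply: (part_b Hpa H2 Hsurj Hker HD' hal).
by rewrite hb hrho.
Qed.
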